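(* The class of PCGs is a strict subset of the intersection of the class of $2$-AND-PCGs and the class of $2$-interval-PCGs; i.e., every PCG is both a $2$-AND-PCG and a $2$-interval-PCG, and there is a graph that is both a $2$-AND-PCG and a $2$-interval-PCG but not a PCG.
   Context: All trees are unrooted with edges weighted by nonnegative reals; $d_T(u,v)$ is the weight of the path between leaves $u,v$ of $T$. A graph $H$ is a PCG if there exist a tree $T$ with leaf set $V(H)$ and an interval $I$ of nonnegative reals such that $\{u,v\}\in E(H)$ iff $d_T(u,v)\in I$. A graph $G$ is a $k$-interval-PCG if there exist a tree $T$ with leaf set $V(G)$ and $k$ pairwise disjoint intervals $I_1,\ldots,I_k$ of nonnegative reals such that $\{u,v\}\in E(G)$ iff $d_T(u,v)\in I_i$ for some $i$. A graph $G=(V,E)$ is a $k$-AND-PCG if there exist $k$ PCGs $G_1,\ldots,G_k$ on vertex set $V$ with $E=\bigcap_i E(G_i)$. *)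

(* Defs.v *)
From HB Require Import structures.
From mathcomp Require Import all_boot all_order all_algebra.
From mathcomp Require Import Rstruct.
Set Implicit Arguments. Unset Strict Implicit. Unset Printing Implicit Defensive.
Import Order.TTheory GRing.Theory Num.Theory.
Local Open Scope ring_scope.

Notation R := Rdefinitions.R.

Definition is_graph (V : finType) (E : rel V) : Prop :=
  symmetric E /\ irreflexive E.

Definition has_cycle (N : finType) (e : rel N) : Prop :=
  exists (x : N) (p : seq N),
    (2 <= size p)%N /\ uniq (x :: p) /\ path e x p /\ e (last x p) x.

Definition is_tree (N : finType) (e : rel N) : Prop :=
  (0 < #|N|)%N /\ is_graph e /\ (forall x y : N, connect e x y) /\ ~ has_cycle e.

Definition degree (N : finType) (e : rel N) (x : N) : nat := #|[set y | e x y]|.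

Definition is_leaf (N : finType) (e : rel N) (x : N) : bool := (degree e x <= 1)%N.

Fixpoint pweight (N : Type) (w : N -> N -> R) (x : N) (p : seq N) : R :=
  match p with
  | [::] => 0
  | y :: q => w x y + pweight w y q
  end.

Definition weighted_tree_on (V N : finType) (e : rel N) (w : N -> N -> R)
    (f : V -> N) : Prop :=
  is_tree e /\
  (forall x y, e x y -> 0 <= w x y /\ w x y = w y x) /\
  injective f /\
  (forall x : N, is_leaf e x <-> exists v : V, f v = x).

Definition dist_in (N : finType) (e : rel N) (w : N -> N -> R) (a b : N)
    (I : interval R) : Prop :=
  exists p : seq N,
    [/\ path e a p, last a p = b, uniq (a :: p) & pweight w a p \in I].

Definition nonneg_itv (I : interval R) : Prop := forall x : R, x \in I -> 0 <= x.

Definition PCG (V : finType) (E : rel V) : Prop :=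
  is_graph E /\
  exists (N : finType) (e : rel N) (w : N -> N -> R) (f : V -> N) (I : interval R),
    weighted_tree_on e w f /\ nonneg_itv I /\
    forall u v : V, u != v -> (E u v <-> dist_in e w (f u) (f v) I).

Definition k_interval_PCG (k : nat) (V : finType) (E : rel V) : Prop :=
  is_graph E /\
  exists (N : finType) (e : rel N) (w : N -> N -> R) (f : V -> N)
         (I : 'I_k -> interval R),
    weighted_tree_on e w f /\
    (forall i, nonneg_itv (I i)) /\
    (forall i j : 'I_k, i != j -> forall x : R, ~ (x \in I i /\ x \in I j)) /\
    forall u v : V, u != v ->
      (E u v <-> exists i : 'I_k, dist_in e w (f u) (f v) (I i)).

Definition k_AND_PCG (k : nat) (V : finType) (E : rel V) : Prop :=
  is_graph E /\
  exists Es : 'I_k -> rel V,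
    (forall i, PCG (Es i)) /\ forall u v : V, E u v = [forall i, Es i u v].

(* Main.v *)
Require Import Defs.
From mathcomp Require Import all_boot all_order all_algebra.
From HB Require Import structures.
From mathcomp Require Import Rstruct lra zify.
Set Implicit Arguments. Unset Strict Implicit. Unset Printing Implicit Defensive.
Import Order.TTheory GRing.Theory Num.Theory.


Section TreeLemmas.
Local Open Scope ring_scope.
Variables (N : finType) (e : rel N) (w : N -> N -> R).
Hypothesis esym : symmetric e.
Hypothesis econ : forall x y, connect e x y.
Hypothesis eacyc : ~ has_cycle e.
Hypothesis wpos : forall x y, e x y -> 0 <= w x y.
Hypothesis wsym : forall x y, e x y -> w x y = w y x.

Definition sp a b p := [&& path e a p, last a p == b & uniq (a :: p)].

Lemma sp_exists a b : exists p, sp a b p.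
Proof.
have /connectP[p pp ->] := econ a b.
case: (shortenP pp) => p' pp' up' _. by exists p'; rewrite /sp pp' eqxx up'.
Qed.

Lemma pweight_cat a p1 p2 :
  pweight w a (p1 ++ p2) = pweight w a p1 + pweight w (last a p1) p2.
Proof. elim: p1 a => [|z p1 IH] a /=; [by rewrite add0r | by rewrite IH addrA]. Qed.

Lemma pweight_ge0 a p : path e a p -> 0 <= pweight w a p.
Proof.
elim: p a => [|z p IH] a //= /andP[eaz pp].
by rewrite addr_ge0 ?wpos ?IH.
Qed.

Lemma pweight_rcons a p z : pweight w a (rcons p z) = pweight w a p + w (last a p) z.
Proof. by rewrite -cats1 pweight_cat /= addr0. Qed.

Lemma first_hit (s : pred N) x r : s (last x r) ->
  exists r1 r2, r = r1 ++ r2 /\ s (last x r1) /\ all (predC s) (belast x r1).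
Proof.
elim: r x => [|z r IH] x /= hl.
  by exists [::], [::].
case hx: (s x).
  by exists [::], (z :: r); rewrite /= hx.
have [r1 [r2 [-> [h1 h2]]]] := IH z hl.
by exists (z :: r1), r2; split => //=; rewrite hx h2.
Qed.

Lemma split_at (a : N) p y : y \in a :: p -> exists p1 p2, p = p1 ++ p2 /\ last a p1 = y.
Proof.
rewrite in_cons => /orP[/eqP->|]; first by exists [::], p.
case/splitPr => p1 p2. by exists (rcons p1 y), p2; rewrite cat_rcons last_rcons.
Qed.

Lemma uniq_suffix (a : N) p1 p2 : uniq (a :: p1 ++ p2) -> uniq (last a p1 :: p2).
Proof. by rewrite -cat_cons (lastI a p1) cat_rcons cat_uniq => /and3P[_ _ ->]. Qed.

Lemma uniq_prefix (a : N) p1 p2 : uniq (a :: p1 ++ p2) -> uniq (a :: p1).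
Proof. by rewrite -cat_cons cat_uniq => /and3P[-> _ _]. Qed.

Lemma sp_cat a p1 p2 : path e a (p1 ++ p2) -> uniq (a :: p1 ++ p2) ->
  sp a (last a p1) p1 /\ sp (last a p1) (last a (p1 ++ p2)) p2.
Proof.
rewrite cat_path => /andP[pp1 pp2] u.
by rewrite /sp pp1 pp2 eqxx last_cat eqxx (uniq_prefix u) (uniq_suffix u).
Qed.


Lemma sp_unique a b p q : sp a b p -> sp a b q -> p = q.
Proof.
elim: p a q => [|z p IH] a q.
  rewrite /sp => /and3P[_ /eqP <- _] /and3P[_ hl uq].
  case: q hl uq => // z q /= /eqP hl /andP[aq _].
  by move: (mem_last z q); rewrite hl (negbTE aq).
case: q => [|z' q].
  rewrite /sp => /and3P[_ /eqP hl /andP[ap _]] /and3P[_ /eqP ab _].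
  by move: (mem_last z p); rewrite /= in hl; rewrite hl -ab (negbTE ap).
move=> hp hq.
case: (eqVneq z z') => [ezz|nzz].
  subst z'.
  move: hp hq; rewrite /sp /= => /and3P[/andP[_ pp] lp /andP[_ up]].
  move=> /and3P[/andP[_ pq] lq /andP[_ uq]].
  by congr (_ :: _); apply: (IH z); apply/and3P; split.
exfalso; apply: eacyc.
move: hp hq; rewrite /sp => /and3P[pp /eqP lp up] /and3P[pq /eqP lq uq].
rewrite /= in lp lq.
have hb : (mem (z' :: q)) (last z p) by rewrite /= lp -lq mem_last.
have [r1 [r2 [ep [hy hbel]]]] := first_hit hb.
set y := last z r1 in hy.
have [q1 [q2 eQ]] : exists q1 q2, z' :: q = q1 ++ y :: q2.
  by case/splitPr: hy => q1 q2; exists q1, q2.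
rewrite eQ in pq uq.
have yq1 : y \notin q1.
  by move: uq; rewrite cons_uniq cat_uniq => /andP[_ /and3P[_ /hasPn H _]]; apply: H; rewrite mem_head.
have pq1 : path e a (rcons q1 y).
  by move: pq; rewrite -cat_rcons cat_path => /andP[].
have prq : path e y (rcons (rev q1) a).
  have := pq1; rewrite -(eq_path (e := fun u v => e v u)); last by move=> u v; rewrite esym.
  by rewrite -rev_path belast_rcons last_rcons rev_cons.
have aq1 : a \notin q1.
  by move: uq => /andP[]; rewrite mem_cat negb_or => /andP[].
have uq1 : uniq q1.
  by move: uq; rewrite cons_uniq cat_uniq => /andP[_ /and3P[]].
rewrite ep in pp up.
have pzr : path e a (z :: r1) by move: pp; rewrite -cat_cons cat_path => /andP[].
have uzr : uniq (a :: z :: r1) by apply: (uniq_prefix (p2 := r2)).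
have disj : forall u, u \in q1 -> u \notin z :: r1.
  move=> u uq1'; rewrite (lastI z r1) mem_rcons in_cons negb_or; apply/andP; split.
    by apply: contraNneq yq1 => eu; move: uq1'; rewrite eu.
  apply/negP => ub; move/allP: hbel => /(_ u ub) /=.
  by rewrite eQ mem_cat uq1'.
exists a, (z :: r1 ++ rev q1); split; [|split; [|split]].
- have hne : ~~ ((r1 == [::]) && (q1 == [::])).
    apply/negP => /andP[/eqP r0 /eqP q0]; move: eQ; rewrite q0 /y r0 /= => -[ez _].
    by rewrite ez eqxx in nzz.
  rewrite /= size_cat size_rev ltnS; move: hne; rewrite -!size_eq0.
  by case: (size r1) => [|?]; case: (size q1).
- rewrite -cat_cons; move: uzr; rewrite cons_uniq => /andP[azr uzr].
  rewrite cons_uniq mem_cat negb_or mem_rev aq1 azr cat_uniq uzr rev_uniq uq1 /= andbT.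
  by apply/hasPn => u; rewrite mem_rev => /disj.
- rewrite -cat_cons cat_path pzr /=.
  by move: prq; rewrite rcons_path => /andP[].
- rewrite -cat_cons last_cat /=.
  by move: prq; rewrite rcons_path => /andP[].
Qed.


Definition D a b := pweight w a (xchoose (sp_exists a b)).

Lemma spD a b p : sp a b p -> pweight w a p = D a b.
Proof. by move=> h; rewrite /D (sp_unique h (xchooseP (sp_exists a b))). Qed.

Lemma D_ge0 a b : 0 <= D a b.
Proof. by apply: pweight_ge0; case/and3P: (xchooseP (sp_exists a b)). Qed.


Lemma last_rev_belast (a : N) p : last (last a p) (rev (belast a p)) = a.
Proof.
by rewrite -(last_cons a) -rev_rcons -lastI rev_cons last_rcons.
Qed.

Lemma pweight_rev a p : path e a p ->
  pweight w (last a p) (rev (belast a p)) = pweight w a p.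
Proof.
elim: p a => [|z p IH] a //= /andP[eaz pp].
by rewrite rev_cons pweight_rcons last_rev_belast IH // (wsym eaz) addrC.
Qed.

Lemma sp_rev a b p : sp a b p ->
  sp b a (rev (belast a p)) /\ pweight w b (rev (belast a p)) = pweight w a p.
Proof.
case/and3P=> pp /eqP lp up; rewrite -lp; split; last exact: pweight_rev.
apply/and3P; split.
- rewrite rev_path; rewrite (@eq_path _ _ e) // => u v; rewrite /= esym.
- by rewrite last_rev_belast.
- by rewrite -rev_rcons -lastI rev_uniq.
Qed.

Lemma D_sym a b : D a b = D b a.
Proof.
have [h1 h2] := sp_rev (xchooseP (sp_exists a b)).
by rewrite -(spD h1) h2.
Qed.

Lemma D_cat a p1 p2 : path e a (p1 ++ p2) -> uniq (a :: p1 ++ p2) ->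
  D a (last a (p1 ++ p2)) = D a (last a p1) + D (last a p1) (last a (p1 ++ p2)).
Proof.
move=> pp up; have [h1 h2] := sp_cat pp up.
have h : sp a (last a (p1 ++ p2)) (p1 ++ p2) by rewrite /sp pp eqxx up.
by rewrite -(spD h) -(spD h1) -(spD h2) pweight_cat.
Qed.

Lemma proj a b p x : sp a b p -> exists p1 p2, p = p1 ++ p2 /\
  D x a = D x (last a p1) + D (last a p1) a /\
  D x b = D x (last a p1) + D (last a p1) b.
Proof.
case/and3P=> pp /eqP lp up.
have [r /and3P[pr /eqP lr ur]] := sp_exists x a.
have hs : (mem (a :: p)) (last x r) by rewrite /= lr mem_head.
have [r1 [r2 [er [hy hbel]]]] := first_hit hs.
have [p1 [p2 [ep ly]]] := split_at hy.
exists p1, p2; split => //; rewrite ly.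
rewrite er in pr ur lr; rewrite ep in pp up lp.
split.
  by rewrite -{1}lr (D_cat pr ur) lr.
have pr2 : path e x (r1 ++ p2).
  rewrite cat_path; move: pr; rewrite cat_path => /andP[-> _] /=.
  by move: pp; rewrite cat_path ly => /andP[_ ->].
have ur2 : uniq (x :: r1 ++ p2).
  rewrite -cat_cons (lastI x r1) cat_rcons cat_uniq; apply/and3P; split.
  - by move: ur; rewrite -cat_cons cat_uniq (lastI x r1) rcons_uniq => /and3P[/andP[_ ->] _ _].
  - apply/hasPn => u uy; apply/negP => ub; move/allP: hbel => /(_ u ub) /=.
    rewrite ep; move: uy; rewrite in_cons => /orP[/eqP ->|up2].
      by rewrite -ly -cat_cons (lastI a p1) cat_rcons mem_cat mem_head orbT.
    by rewrite in_cons mem_cat up2 !orbT.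
  - by move: (uniq_suffix up); rewrite ly.
by have := D_cat pr2 ur2; rewrite last_cat -ly -last_cat lp ly.
Qed.

Lemma D_tri u v x : D u v <= D u x + D x v.
Proof.
have hp := xchooseP (sp_exists u v).
have [p1 [p2 [ep [h1 h2]]]] := proj x hp.
case/and3P: hp => pp /eqP lp up.
move: pp up lp; rewrite ep => pp up lp.
have h3 := D_cat pp up; rewrite lp in h3.
have s1 := D_sym u x. have s2 := D_sym (last u p1) u.
have := D_ge0 x (last u p1); lra.
Qed.

Lemma split_cat2 (p1 p2 q1 q2 : seq N) : p1 ++ p2 = q1 ++ q2 ->
  (exists m, q1 = p1 ++ m /\ p2 = m ++ q2) \/ (exists m, p1 = q1 ++ m /\ q2 = m ++ p2).
Proof.
elim: p1 q1 => [|z p1 IH] q1 /=.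
  by move=> ->; left; exists q1.
case: q1 => [|t q1] /=.
  by move=> <-; right; exists (z :: p1).
by case=> -> /IH [[m [-> ->]]|[m [-> ->]]]; [left|right]; exists m.
Qed.

Lemma sp_D_cat a b p1 p2 : sp a b (p1 ++ p2) ->
  D a b = D a (last a p1) + D (last a p1) b /\ sp a (last a p1) p1 /\ sp (last a p1) b p2.
Proof.
case/and3P=> pp /eqP lp up.
have [h1 h2] := sp_cat pp up; rewrite lp in h2.
by split => //; rewrite -lp (D_cat pp up) lp.
Qed.

Lemma four_point a b c d :
  D a b + D c d <= Num.max (D a c + D b d) (D a d + D b c).
Proof.
have hp := xchooseP (sp_exists a b).
have [p1 [p2 [ep [hc1 hc2]]]] := proj c hp.
have [q1 [q2 [eqq [hd1 hd2]]]] := proj d hp.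
have hpp := hp; rewrite ep in hpp.
have [hab _] := sp_D_cat hpp.
have t1 := D_tri c d (last a p1). have t2 := D_tri (last a p1) d (last a q1).
have g1 := D_ge0 d (last a q1).
rewrite le_max.
have [[m [e1 e2]]|[m [e1 e2]]] := split_cat2 (etrans (Logic.eq_sym ep) eqq).
  apply/orP; right.
  have hq : sp a b ((p1 ++ m) ++ q2) by rewrite -catA -e2 -ep.
  have [_ [hq1 _]] := sp_D_cat hq.
  have [hz _] := sp_D_cat hq1.
  rewrite last_cat in hz.
  rewrite e1 last_cat in hd1 hd2 t2 g1 *.
  have s1 := D_sym a d. have s2 := D_sym b c. have s3 := D_sym a (last (last a p1) m).
  have s4 := D_sym d (last (last a p1) m).
  lra.
apply/orP; left.
have hq : sp a b (q1 ++ (m ++ p2)) by rewrite -e2 -eqq.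
have [_ [_ hq2]] := sp_D_cat hq.
have [hzb _] := sp_D_cat hq2.
have hq' : sp a b ((q1 ++ m) ++ p2) by rewrite -catA.
have [_ [hq1 _]] := sp_D_cat hq'.
have [hy _] := sp_D_cat hq1.
rewrite -last_cat -e1 in hzb hy.
have s1 := D_sym a c. have s2 := D_sym b d. have s3 := D_sym a (last a p1).
have s4 := D_sym d (last a q1). have s5 := D_sym (last a p1) (last a q1).
lra.
Qed.

Lemma dist_in_D a b I : dist_in e w a b I <-> D a b \in I.
Proof.
split.
  by case=> p [pp lp up hI]; rewrite -(@spD a b p) // /sp pp lp eqxx up.
move=> h; exists (xchoose (sp_exists a b)).
by case/and3P: (xchooseP (sp_exists a b)) => pp /eqP lp up; split.
Qed.

End TreeLemmas.


Definition wt (u : nat) : nat := nth 0 [:: 1;1;4;4;2;2;3;3]%N u.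
Definition edge8 (u v : nat) : bool := (u != v) && (wt u + wt v != 5)%N.
Definition ne8 : seq (nat * nat) :=
  [:: (0,2);(0,3);(1,2);(1,3);(4,6);(4,7);(5,6);(5,7)]%N.
Definition lev (bits : seq bool) (u v : nat) : nat :=
  if edge8 u v then 1 else if nth false bits (index (minn u v, maxn u v) ne8) then 0 else 2.
Definition dom bits (x1 x2 y1 y2 : nat * nat) :=
  let l := fun p : nat * nat => lev bits p.1 p.2 in
  ((l y1 < l x1) && (l y2 < l x2)) || ((l y2 < l x1) && (l y1 < l x2)).
Definition dom3 bits P Q R S T U := dom bits P Q R S && dom bits P Q T U.
Definition viol bits (q : nat * nat * nat * nat) :=
  let: (a, b, c, d) := q in
  uniq [:: a; b; c; d] &&
  [|| dom3 bits (a,b) (c,d) (a,c) (b,d) (a,d) (b,c),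
      dom3 bits (a,c) (b,d) (a,b) (c,d) (a,d) (b,c)
    | dom3 bits (a,d) (b,c) (a,b) (c,d) (a,c) (b,d)].
Definition pairs8 : seq (nat * nat) := [seq (a, b) | a <- iota 0 8, b <- iota 0 8].
Definition quads : seq (nat * nat * nat * nat) := Eval vm_compute in
  [seq q <- [seq (p.1, p.2, q.1, q.2) | p <- pairs8, q <- pairs8] | (q.1.1.1 < q.1.1.2 < q.1.2)%N && (q.1.2 < q.2)%N].
Fixpoint bitsn (n : nat) : seq (seq bool) :=
  if n is n'.+1 then [seq b :: s | b <- [:: true; false], s <- bitsn n'] else [:: [::]].

Lemma check8 : all (fun bits => has (viol bits) quads) (bitsn 8).
Proof. vm_compute. reflexivity. Qed.

Lemma bitsn_mem n (s : seq bool) : size s = n -> s \in bitsn n.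
Proof.
elim: n s => [|n IH] [|b s] //.
move=> [hs]; apply/allpairsP; exists (b, s); split => //=; last exact: IH.
by case: b.
Qed.

Lemma quads_ok : all (fun q : nat * nat * nat * nat =>
   [&& q.1.1.1 < 8, q.1.1.2 < 8, q.1.2 < 8 & q.2 < 8]%N) quads.
Proof. by vm_compute. Qed.

Lemma nonedge_in : all (fun u => all (fun v =>
   (u != v) && ~~ edge8 u v ==> ((minn u v, maxn u v) \in ne8)) (iota 0 8)) (iota 0 8).
Proof. by vm_compute. Qed.

Section NoReal.
Local Open Scope ring_scope.
Variables (DD : nat -> nat -> R) (bits : seq bool).
Hypothesis Dsym : forall u v, DD u v = DD v u.
Hypothesis D4 : forall a b c d,
  DD a b + DD c d <= Num.max (DD a c + DD b d) (DD a d + DD b c).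
Hypothesis Hlev : forall u v x y, (u < 8)%N -> (v < 8)%N -> (x < 8)%N -> (y < 8)%N ->
  u != v -> x != y -> (lev bits u v < lev bits x y)%N -> DD u v < DD x y.

Lemma dom_lt (a b c d a' b' c' d' : nat) :
  (a < 8)%N -> (b < 8)%N -> (c < 8)%N -> (d < 8)%N ->
  (a' < 8)%N -> (b' < 8)%N -> (c' < 8)%N -> (d' < 8)%N ->
  a != b -> c != d -> a' != b' -> c' != d' ->
  dom bits (a, b) (c, d) (a', b') (c', d') -> DD a' b' + DD c' d' < DD a b + DD c d.
Proof.
move=> ha hb hc hd ha' hb' hc' hd' nab ncd nab' ncd'.
rewrite /dom /= => /orP[/andP[h1 h2]|/andP[h1 h2]].
  have := Hlev ha' hb' ha hb nab' nab h1; have := Hlev hc' hd' hc hd ncd' ncd h2; lra.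
have := Hlev hc' hd' ha hb ncd' nab h1; have := Hlev ha' hb' hc hd nab' ncd h2; lra.
Qed.

Lemma no_real q : q \in quads -> viol bits q -> False.
Proof.
move=> hq; have /and4P[ha hb hc hd] := allP quads_ok q hq.
case: q hq ha hb hc hd => [[[a b] c] d] _ /= ha hb hc hd.
rewrite /viol => /andP[hu +].
move: hu; rewrite /= !inE !negb_or.
move=> /and4P[/and3P[nab nac nad] /andP[nbc nbd] ncd _].
have ncb : c != b by rewrite eq_sym.
have ndb : d != b by rewrite eq_sym.
have ndc : d != c by rewrite eq_sym.
rewrite /dom3 => /or3P[/andP[h1 h2]|/andP[h1 h2]|/andP[h1 h2]].
- have := dom_lt ha hb hc hd ha hc hb hd nab ncd nac nbd h1.
  have := dom_lt ha hb hc hd ha hd hb hc nab ncd nad nbc h2.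
  by have := D4 a b c d; rewrite le_max => /orP[]; lra.
- have := dom_lt ha hc hb hd ha hb hc hd nac nbd nab ncd h1.
  have := dom_lt ha hc hb hd ha hd hb hc nac nbd nad nbc h2.
  have := Dsym c b.
  by have := D4 a c b d; rewrite le_max => /orP[]; lra.
- have := dom_lt ha hd hb hc ha hb hc hd nad nbc nab ncd h1.
  have := dom_lt ha hd hb hc ha hc hb hd nad nbc nac nbd h2.
  have := Dsym d c; have := Dsym d b.
  by have := D4 a d b c; rewrite le_max => /orP[]; lra.
Qed.
End NoReal.

Section Main.
Local Open Scope ring_scope.

Lemma itv_convex (I : interval R) (x y z : R) :
  x \in I -> z \in I -> x <= y -> y <= z -> y \in I.
Proof.
case: I => l u; rewrite !itv_boundlr => /andP[lx _] /andP[_ zu] xy yz.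
apply/andP; split.
  by apply: le_trans lx _; rewrite leBSide /= xy.
by apply: le_trans zu; rewrite leBSide /= yz.
Qed.

Definition G8 : rel 'I_8 := fun u v => edge8 u v.

Lemma G8_not_PCG : ~ PCG G8.
Proof.
case=> _ [N [e [w [f [I [[[_ [[esym eirr] [econ eacyc]]] [hw [finj hleaf]]] [_ hE]]]]]]].
have wpos : forall x y, e x y -> 0 <= w x y by move=> x y /hw [].
have wsym : forall x y, e x y -> w x y = w y x by move=> x y /hw [].
pose DD (u v : nat) := D w econ (f (inord u : 'I_8)) (f (inord v)).
have Dsym : forall u v, DD u v = DD v u by move=> u v; apply: D_sym.
have D4 : forall a b c d, DD a b + DD c d <= Num.max (DD a c + DD b d) (DD a d + DD b c).
  by move=> a b c d; apply: four_point.
have Hedge : forall u v, (u < 8)%N -> (v < 8)%N -> u != v -> (edge8 u v <-> DD u v \in I).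
  move=> u v hu hv nuv.
  have := hE (inord u) (inord v).
  rewrite /G8 !inordK // => h; rewrite -dist_in_D //; apply: h.
  by apply: contra nuv => /eqP /(congr1 val) /=; rewrite !inordK // => ->.
pose m0 := DD 0%N 4%N.
have hm0 : m0 \in I by apply/Hedge.
pose bits := [seq DD p.1 p.2 < m0 | p <- ne8].
have Hsem : forall u v, (u < 8)%N -> (v < 8)%N -> u != v ->
    lev bits u v = if edge8 u v then 1%N else if DD u v < m0 then 0%N else 2%N.
  move=> u v hu hv nuv; rewrite /lev; case: ifP => // he.
  have hin : (minn u v, maxn u v) \in ne8.
    have := allP (allP nonedge_in u _) v; rewrite !mem_iota /= hu hv he nuv => /(_ isT isT).
    done.
  rewrite (nth_map (0%N, 0%N)) ?index_mem // nth_index //.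
by case: (leqP u v) => huv //=; rewrite Dsym.
have Hlev : forall u v x y, (u < 8)%N -> (v < 8)%N -> (x < 8)%N -> (y < 8)%N ->
    u != v -> x != y -> (lev bits u v < lev bits x y)%N -> DD u v < DD x y.
  move=> u v x y hu hv hx hy nuv nxy.
  rewrite (Hsem u v) // (Hsem x y) //.
  have := Hedge u v hu hv nuv; have := Hedge x y hx hy nxy.
  case: (edge8 u v); case: (edge8 x y) => h2 h1.
  - by [].
  - have i1 : DD u v \in I by apply/h1.
    have i2 : DD x y \notin I by apply/negP => /h2.
    case: ifP => // hl _; rewrite ltNge; apply/negP => hle.
    by move/negP: i2; apply; apply: (itv_convex hm0 i1) => //; rewrite leNgt hl.
  - have i2 : DD x y \in I by apply/h2.
    have i1 : DD u v \notin I by apply/negP => /h1.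
    case: ifP => // hl _; rewrite ltNge; apply/negP => hle.
    by move/negP: i1; apply; apply: (itv_convex i2 hm0) => //; apply: ltW.
  - case: ifP => hl1; case: ifP => hl2 //= _.
    by apply: lt_le_trans hl1 _; rewrite leNgt hl2.
have hb : bits \in bitsn 8 by apply: bitsn_mem; rewrite size_map.
have /hasP [q hq hv] := allP check8 bits hb.
exact: (no_real Dsym D4 Hlev hq hv).
Qed.
End Main.


Section Star.
Local Open Scope ring_scope.
Variables (n : nat) (wl : 'I_n -> nat).
Hypothesis hn : (1 < n)%N.

Definition se : rel (option 'I_n) := fun x y =>
  match x, y with Some _, None | None, Some _ => true | _, _ => false end.
Definition sw (x y : option 'I_n) : R :=
  match x, y with Some u, None | None, Some u => (wl u)%:R | _, _ => 0 end.

Lemma se_sym : symmetric se. Proof. by case=> [?|] [?|]. Qed.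
Lemma se_irr : irreflexive se. Proof. by case. Qed.
Lemma se_con : forall x y, connect se x y.
Proof.
have hN : forall x, connect se x None.
  by case=> [u|]; [apply: connect1 | apply: connect0].
move=> x y; apply: connect_trans (hN x) _.
by case: y => [v|]; [apply: connect1 | apply: connect0].
Qed.
Lemma se_acyc : ~ has_cycle se.
Proof.
case=> x [[|p1 [|p2 r]] [//= _ [hu [hp hl]]]].
case: x p1 p2 hu hp hl => [u|] [v|] [t|] //=.
  case: r => [|[s|] r] //=.
by rewrite andbF.
Qed.

Lemma sw_ok x y : se x y -> 0 <= sw x y /\ sw x y = sw y x.
Proof. by case: x y => [u|] [v|] //= _; rewrite ler0n. Qed.

Lemma star_tree : weighted_tree_on se sw Some.
Proof.
split; [split; [by rewrite card_option|split; [split; [exact: se_sym|exact: se_irr]|]]|].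
  by split; [exact: se_con | exact: se_acyc].
split; first exact: sw_ok.
split; first by move=> u v [].
move=> x; rewrite /is_leaf /degree; split.
  case: x => [u|]; first by exists u.
  have -> : [set y | se None y] = [set~ None] by apply/setP => -[y|]; rewrite !inE.
  by rewrite cardsC1 card_option /= card_ord leqNgt hn.
case=> u <-.
have -> : [set y | se (Some u) y] = [set None] by apply/setP => -[y|]; rewrite !inE.
by rewrite cards1.
Qed.

Lemma star_dist (I : interval R) (u v : 'I_n) : u != v ->
  (dist_in se sw (Some u) (Some v) I <-> ((wl u + wl v)%:R \in I)).
Proof.
move=> nuv.
have wpos : forall x y, se x y -> 0 <= sw x y by move=> x y /sw_ok [].
have wsym : forall x y, se x y -> sw x y = sw y x by move=> x y /sw_ok [].
rewrite (dist_in_D sw se_sym se_con se_acyc).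
have hsp : sp se (Some u) (Some v) [:: None; Some v].
  by rewrite /sp /= !inE eqxx /= andbT; apply: contra nuv => /eqP [->].
rewrite -(spD sw se_sym se_con se_acyc hsp) /= addr0 natrD.
done.
Qed.
End Star.


Definition s1w (u : nat) : nat := nth 0 [:: 0;2;1;1;2;4;3;3]%N u.
Definition s2w (u : nat) : nat := nth 0 [:: 2;4;3;3;0;2;1;1]%N u.
Definition Srel (s : nat -> nat) : rel 'I_8 :=
  fun u v => (u != v) && (2 <= s u + s v <= 6)%N.

Lemma and_check : all (fun u => all (fun v => edge8 u v ==
   ((u != v) && (2 <= s1w u + s1w v <= 6)%N && ((u != v) && (2 <= s2w u + s2w v <= 6)%N)))
   (iota 0 8)) (iota 0 8).
Proof. by vm_compute. Qed.

Section Fin.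
Local Open Scope ring_scope.

Lemma G8_graph : is_graph G8.
Proof.
split; first by move=> u v; rewrite /G8 /edge8 eq_sym addnC.
by move=> u; rewrite /G8 /edge8 eqxx.
Qed.

Lemma Srel_PCG s : PCG (Srel s).
Proof.
split.
  split; first by move=> u v; rewrite /Srel eq_sym addnC.
  by move=> u; rewrite /Srel eqxx.
exists (option 'I_8), (@se 8), (sw (fun u : 'I_8 => s u)), Some, `[2%:R, 6%:R].
split; first exact: star_tree.
split.
  by move=> x; rewrite in_itv /= => /andP[h _]; apply: le_trans h.
move=> u v nuv; rewrite star_dist // in_itv /= !ler_nat /Srel nuv.
done.
Qed.

Lemma forall2 (P : 'I_2 -> bool) : [forall i, P i] = P ord0 && P (@Ordinal 2 1 isT).
Proof.
apply/forallP/andP => [h|[h0 h1] i]; first by split; apply: h.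
case: i => -[|[|m]] hi //.
  by have -> : Ordinal hi = ord0 by apply: val_inj.
by have -> : Ordinal hi = Ordinal (isT : (1 < 2)%N) by apply: val_inj.
Qed.

Lemma G8_AND : k_AND_PCG 2 G8.
Proof.
split; first exact: G8_graph.
exists (fun i : 'I_2 => if i == ord0 then Srel s1w else Srel s2w).
split.
  by move=> i; case: ifP => _; apply: Srel_PCG.
move=> u v; rewrite forall2 /=.
have := allP (allP and_check u _) v; rewrite !mem_iota /= !ltn_ord => /(_ isT isT) /eqP.
by rewrite /G8 /Srel.
Qed.

Lemma G8_int : k_interval_PCG 2 G8.
Proof.
split; first exact: G8_graph.
exists (option 'I_8), (@se 8), (sw (fun u : 'I_8 => wt u)), Some,
  (fun i : 'I_2 => if i == ord0 then `[0, 4%:R] else `[6%:R, +oo[).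
split; first exact: star_tree.
split.
  move=> i x; case: ifP => _; rewrite in_itv /=.
    by case/andP.
  rewrite andbT => h.
  exact: le_trans (ler0n _ 6) h.
split.
  move=> i j nij x; case: ifP => hi; case: ifP => hj.
  - by move: nij; rewrite (eqP hi) (eqP hj) eqxx.
  - rewrite !in_itv /= => -[/andP[_ h1] /andP[h2 _]].
    by have := le_trans h2 h1; rewrite ler_nat.
  - rewrite !in_itv /= => -[/andP[h2 _] /andP[_ h1]].
    by have := le_trans h2 h1; rewrite ler_nat.
  - move: nij hi hj; case: i => -[|[|?]] //; case: j => -[|[|?]] //.
move=> u v nuv; rewrite /G8 /edge8 nuv /=; split.
  move=> h; case: (leqP (wt u + wt v) 4) => h4.
    by exists ord0; rewrite star_dist //= in_itv /= ler0n ler_nat h4.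
  exists (@Ordinal 2 1 isT); rewrite star_dist //= in_itv /= ler_nat andbT.
  by move: h h4; clear; lia.
case=> i; rewrite star_dist //; case: ifP => _; rewrite in_itv /= ?ler_nat ?ler0n /=.
  by clear; lia.
by rewrite andbT; clear; lia.
Qed.

Lemma PCG_AND (V : finType) (E : rel V) : PCG E -> k_AND_PCG 2 E.
Proof.
move=> h; split; first by case: h.
exists (fun _ => E); split => // u v.
by rewrite forall2 andbb.
Qed.

Lemma PCG_int (V : finType) (E : rel V) : PCG E -> k_interval_PCG 2 E.
Proof.
case=> hg [N [e [w [f [I [hT [hI hE]]]]]]]; split => //.
exists N, e, w, f, (fun i : 'I_2 => if i == ord0 then I else Interval (BRight 0) (BLeft 0)).
split => //; split.
  move=> i x; case: ifP => _; first exact: hI.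
  by rewrite in_itv /= => /andP[h _]; apply: ltW.
split.
  move=> i j nij x; case: ifP => hi; case: ifP => hj.
  - by move: nij; rewrite (eqP hi) (eqP hj) eqxx.
  - by rewrite !in_itv /= => -[_ /andP[h1 h2]]; have := lt_trans h1 h2; rewrite ltxx.
  - by rewrite !in_itv /= => -[/andP[h1 h2] _]; have := lt_trans h1 h2; rewrite ltxx.
  - move: nij hi hj; case: i => -[|[|?]] //; case: j => -[|[|?]] //.
move=> u v nuv; rewrite hE //; split.
  by move=> h; exists ord0.
case=> i; case: ifP => // _ [p [_ _ _]].
by rewrite in_itv /= => /andP[h1 h2]; have := lt_trans h1 h2; rewrite ltxx.
Qed.
End Fin.

Theorem theorem10 :
  (forall (V : finType) (E : rel V),
      PCG E -> k_AND_PCG 2 E /\ k_interval_PCG 2 E) /\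
  (exists (V : finType) (E : rel V),
      [/\ k_AND_PCG 2 E, k_interval_PCG 2 E & ~ PCG E]).
Proof.
split.
  by move=> V E h; split; [apply: PCG_AND | apply: PCG_int].
exists ('I_8 : finType), G8; split.
- exact: G8_AND.
- exact: G8_int.
- exact: G8_not_PCG.
Qed.
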